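(* Let $p$ be an odd prime and let $(G,H,T)$ be the envelope of a right conjugacy closed loop of order $2p$. Let $K$ be a subgroup with $H\lneq K\lneq G$, $|G:K|=2$ and $|K:H|=p$. Suppose $1\ne H\trianglelefteq K$. Then $|H|=p$ and there is an involution $a\in G\setminus K$ with $K=H\times H^a$. In particular $G\cong C_p\wr C_2$.
   Context: For a finite loop $\mathcal{L}$ with identity $e$: $G=\langle R_a\mid a\in\mathcal L\rangle$ with $R_a\colon x\mapsto xa$, $H$ the stabilizer of $e$ in $G$, $T=\{R_a\}$; $(G,H,T)$ is the envelope; the loop is right conjugacy closed if $T$ is a union of conjugacy classes of $G$. *)

(* Defs.v *)
From HB Require Import structures.
From mathcomp Require Import all_boot all_algebra all_fingroup.
Set Implicit Arguments. Unset Strict Implicit. Unset Printing Implicit Defensive.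
Import GRing.Theory.

Local Open Scope group_scope.

(* A finite loop: a finite set L with a binary operation mul and a two-sided
   identity e such that all left and right translations are bijective
   (for a finite carrier, injectivity is equivalent to bijectivity, i.e. to
   unique solvability of a x = b and y a = b). *)
Definition is_loop (L : finType) (mul : L -> L -> L) (e : L) : Prop :=
  [/\ forall x, mul e x = x,
      forall x, mul x e = x,
      forall a, injective (mul a)
    & forall a, injective (fun x => mul x a)].

Definition rtrans (L : finType) (mul : L -> L -> L) : {set {perm L}} :=
  [set s : {perm L} | [exists a : L, [forall x : L, s x == mul x a]]].

Definition rmlt (L : finType) (mul : L -> L -> L) : {set {perm L}} :=
  <<rtrans mul>>.

Definition rinn (L : finType) (mul : L -> L -> L) (e : L) : {set {perm L}} :=
  [set g in rmlt mul | g e == e].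

Definition rcc (L : finType) (mul : L -> L -> L) : Prop :=
  forall t g, t \in rtrans mul -> g \in rmlt mul -> t ^ g \in rtrans mul.

(* The wreath product C_p wr C_2 in its imprimitive permutation action on
   bool * 'Z_p: generated by f : (b,x) |-> (b, x+1 if b else x) and
   the swap s : (b,x) |-> (~~ b, x). *)
Section Wreath.
Variable p : nat.
Definition wr_f (u : bool * 'Z_p) : bool * 'Z_p :=
  (u.1, if u.1 then (u.2 + 1)%R else u.2).
Definition wr_s (u : bool * 'Z_p) : bool * 'Z_p := (~~ u.1, u.2).
Lemma wr_f_inj : injective wr_f.
Proof.
move=> [b x] [c y]; rewrite /wr_f /= => -[<-]; case: b => [|-> //].
by move=> /(congr1 (fun z => z - 1)%R); rewrite !addrK => ->.
Qed.
Lemma wr_s_inj : injective wr_s.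
Proof. by move=> [b x] [c y] [/negb_inj -> ->]. Qed.
Definition wreath_Cp_C2 : {set {perm (bool * 'Z_p)}} :=
  <<[set perm wr_f_inj; perm wr_s_inj]>>.
End Wreath.

(* Main.v *)
Require Import Defs.
From mathcomp Require Import all_boot all_algebra all_fingroup.
From mathcomp Require Import all_solvable zify.
Local Open Scope group_scope.
Set Implicit Arguments. Unset Strict Implicit.

Section Grp.
Variable gT : finGroupType.
Implicit Types G K H M : {group gT}.

Lemma idx2_full K M G : K \proper M -> M \subset G -> #|G:K| = 2 -> M :=: G.
Proof.
move=> pKM sMG iGK; have sKM := proper_sub pKM.
have := Lagrange_index sMG sKM; rewrite iGK => E.
have h1 : 1 < #|M:K| by rewrite indexg_gt1; case/andP: (pKM) => /=; rewrite /proper => _ ->.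
have h0 := indexg_gt0 G M.
apply: index1g => //; lia.
Qed.

Lemma idx2_mul K G x y : K \subset G -> #|G:K| = 2 -> x \in G :\: K -> y \in G :\: K -> x * y \in K.
Proof.
move=> sKG iGK Hx Hy.
have Hy' : y^-1 \in G :\: K.
  by case/setDP: Hy => Gy nKy; rewrite !inE !groupV Gy nKy.
move: Hx; rewrite -(rcoset_index2 sKG iGK Hy') => /rcosetP[k Kk ->].
by rewrite -mulgA mulVg mulg1.
Qed.

Lemma core_main G K H p b :
  prime p -> (forall N : {group gT}, N <| G -> N \subset H -> N :=: 1) ->
  H \subset K -> K \subset G -> #|G:K| = 2 -> #|K:H| = p -> H :!=: 1 -> H <| K ->
  b \in G :\: K ->
  [/\ #|H| = p, H :&: H :^ b = 1 & H \x H :^ b = K].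
Proof.
move=> pp core sHK sKG iGK iKH ntH nHK Gb.
have nKG : K <| G := index2_normal sKG iGK.
have [Gb1 notKb] := setDP Gb.
have bb : b * b \in K by exact: (idx2_mul sKG iGK Gb Gb).
have bNK : b \in 'N(K) by apply: (subsetP (normal_norm nKG)).
have nHbK : H :^ b <| K by rewrite -(normP bNK) normalJ.
have KNH := normal_norm nHK.
have KNHb := normal_norm nHbK.
have XG : (H :&: H :^ b)%G <| G.
  have sN : 'N_G(H :&: H :^ b) :=: G.
    apply: (@idx2_full K) => //; last exact: subsetIl.
    rewrite properE; apply/andP; split.
      by rewrite subsetI sKG normsI.
    have bN : b \in 'N(H :&: H :^ b).
      apply/normP; rewrite conjIg -conjsgM (normP (subsetP KNH _ bb)) setIC //.
    apply/negP => /subsetP /(_ b); rewrite inE Gb1 bN => /(_ isT).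
    by apply/negP.
  by rewrite /normal /= subIset ?sHK ?(subset_trans sHK) // -{1}sN subsetIr.
have X1 : H :&: H :^ b = 1 by apply: (core _ XG); exact: subsetIl.
have sHbK := normal_sub nHbK.
have cardM : #|H * H :^ b| = (#|H| * #|H|)%N by rewrite TI_cardMg // cardJg.
have jE : H <*> H :^ b = H * H :^ b by rewrite norm_joinEr // (subset_trans sHbK).
have sJK : H <*> H :^ b \subset K by rewrite join_subG sHK.
have dv : #|H * H :^ b| %| #|K| by rewrite -jE; exact: cardSg sJK.
rewrite cardM -(Lagrange sHK) iKH dvdn_pmul2l ?cardG_gt0 // in dv.
have cH : #|H| = p.
  by apply/(prime_nt_dvdP pp) => //; rewrite -trivg_card1.
split => //.
have eK : H * H :^ b = K.
  by apply/eqP; rewrite eqEcard -{1}jE sJK cardM -(Lagrange sHK) iKH cH leqnn.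
rewrite -eK; apply: dprodE => //.
have cc : [~: H, H :^ b] \subset H :&: H :^ b.
  by rewrite subsetI commg_subl commg_subr (subset_trans sHbK) // (subset_trans sHK).
by rewrite centsC; apply/commG1P; apply/trivgP; rewrite -X1.
Qed.
End Grp.

Section Iso.
Variables (L : finType) (e : L) (p : nat) (G K H : {group {perm L}}) (h a : {perm L}).
Hypotheses (pp : prime p) (cardL : #|L| = (2 * p)%N) (hH : H :=: <[h]>) (oh : #[h] = p)
  (Ga : a \in G) (notKa : a \notin K) (aa : a * a = 1)
  (Hstab : forall g, (g \in H) = (g \in G) && (g e == e))
  (HK : H * H :^ a = K) (TI : H :&: H :^ a = 1) (sKG : K \subset G)
  (cent : H :^ a \subset 'C(H)) (iGK : #|G:K| = 2).

Let ha := h ^ a.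
Let p1 : 1 < p. Proof. exact: prime_gt1. Qed.
Let hinH : h \in H. Proof. by rewrite hH cycle_id. Qed.
Let haHa : forall i, ha ^+ i \in H :^ a.
Proof. by move=> i; rewrite /ha -conjXg memJ_conjg groupX. Qed.
Let sHK : H \subset K. Proof. by rewrite -HK mulG_subl. Qed.
Let sHaK : H :^ a \subset K. Proof. by rewrite -HK mulG_subr. Qed.
Let sHG : H \subset G. Proof. exact: subset_trans sKG. Qed.
Let hG : h \in G. Proof. exact: subsetP sHG _ hinH. Qed.
Let haG : ha \in G. Proof. by rewrite /ha groupJ. Qed.
Let ainv : a^-1 = a. Proof. by rewrite -[a^-1]mulg1 -aa mulKg. Qed.
Let hfix : h e = e. Proof. by move: hinH; rewrite Hstab => /andP[_ /eqP]. Qed.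
Let comm_hha : commute h ha.
Proof.
have : ha \in 'C(H) by apply: (subsetP cent); rewrite /ha memJ_conjg.
by move/centP => /(_ h hinH).
Qed.
Let oha : #[ha] = p. Proof. by rewrite /ha orderJ. Qed.

Definition psi (u : bool * 'Z_p) : L :=
  if u.1 then (h ^+ u.2) (a e) else (ha ^+ u.2) e.

Lemma psi_f u : psi (wr_f u) = h (psi u).
Proof.
case: u => [[|] i]; rewrite /psi /wr_f /=.
  have E m : h ^+ (m %% p) = h ^+ m by rewrite -{1}oh expg_mod_order.
  have E' m : h ^+ (m %% (Zp_trunc p).+2) = h ^+ m by rewrite Zp_cast // E.
  by rewrite -[RHS]permM -expgSr modnDmr E' addn1.
by rewrite -permM -(commuteX _ comm_hha) permM hfix.
Qed.

Let aaK x : a (a x) = x. Proof. by rewrite -permM aa perm1. Qed.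
Let haX i : ha ^+ i = (h ^+ i) ^ a. Proof. by rewrite /ha conjXg. Qed.

Lemma psi_s u : psi (wr_s u) = a (psi u).
Proof.
case: u => [[|] i]; rewrite /psi /wr_s /= haX.
  by rewrite -{1}[e]aaK permJ.
by rewrite -{2}[e]aaK permJ aaK.
Qed.

Let TI1 x : x \in H -> x \in H :^ a -> x = 1.
Proof.
move=> x1 x2; have : x \in H :&: H :^ a by rewrite inE x1 x2.
by rewrite TI => /set1gP.
Qed.

Let Zp_eq (i j : 'Z_p) : i = j %[mod p] -> i = j.
Proof.
move=> E; apply: val_inj => /=.
have Ec := Zp_cast p1.
have li : (i : nat) < p by rewrite -[X in _ < X]Ec ltn_ord.
have lj : (j : nat) < p by rewrite -[X in _ < X]Ec ltn_ord.
by rewrite -(modn_small li) -(modn_small lj).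
Qed.

Let cross (i j : 'Z_p) : (ha ^+ i) e <> (h ^+ j) (a e).
Proof.
move=> E.
have yH : ha ^+ i * (h ^+ j)^-1 * a \in H.
  rewrite Hstab !groupM ?groupV ?groupX //=.
  by rewrite !permM E permK aaK.
have hK : ha ^+ i * (h ^+ j)^-1 \in K.
  by rewrite groupM ?groupV ?(subsetP sHaK _ (haHa i)) // (subsetP sHK) ?groupX.
by move: (subsetP sHK _ yH); rewrite groupMl // (negPf notKa).
Qed.

Lemma psi_inj : injective psi.
Proof.
move=> [[|] i] [[|] j]; rewrite /psi /= => E.
- set x := h ^+ i * (h ^+ j)^-1.
  have xH : x \in H by rewrite groupM ?groupV ?groupX.
  have xa : x (a e) = a e by rewrite permM E permK.
  have x1 : x ^ a = 1.
    apply: TI1; last by rewrite memJ_conjg.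
    rewrite Hstab groupJ ?(subsetP sHG _ xH) //=.
    by rewrite -{1}[e]aaK permJ xa aaK.
  have : x == 1 by rewrite -(conjg_eq1 x a) x1.
  rewrite -eq_mulgV1 eq_expg_mod_order oh => /eqP/Zp_eq ->. by [].
- by case: (cross (esym E)).
- by case: (cross E).
- set x := ha ^+ i * (ha ^+ j)^-1.
  have xH : x \in H.
    by rewrite Hstab groupM ?groupV ?groupX //= permM E permK.
  have x1 : x = 1 by apply: TI1; rewrite // groupM ?groupV.
  have : x == 1 by rewrite x1.
  rewrite -eq_mulgV1 eq_expg_mod_order oha => /eqP/Zp_eq ->. by [].
Qed.

Lemma psi_bij : bijective psi.
Proof.
apply: inj_card_bij psi_inj _.
by rewrite cardL card_prod card_bool card_ord Zp_cast.
Qed.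

Lemma Ggen : G :=: <<[set h; a]>>.
Proof.
have ghG : <<[set h; a]>> \subset G by rewrite gen_subG subUset !sub1set hG Ga.
have hg : h \in <<[set h; a]>> by rewrite mem_gen // !inE eqxx.
have ag : a \in <<[set h; a]>> by rewrite mem_gen // !inE eqxx orbT.
apply/esym; apply: (@idx2_full _ K) => //.
rewrite properE; apply/andP; split.
  rewrite -HK mul_subG // hH ?cycle_subG // -cycleJ cycle_subG groupJ //.
by apply/negP => /subsetP /(_ a ag); apply/negP.
Qed.

Lemma iso_main : G \isog wreath_Cp_C2 p.
Proof.
have [q psiK qK] := psi_bij.
have Pinj (g : {perm L}) : injective (fun u => q (g (psi u))).
  by move=> u v /(can_inj qK)/perm_inj/psi_inj.
pose Phi g := perm (Pinj g).
have PhiM : {in G &, {morph Phi : x y / x * y}}.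
  by move=> x y _ _; apply/permP=> u; rewrite !permE /= /Phi !permE /= qK.
have fM : morphic G Phi by apply/morphicP.
change (G \isog [group of <<[set perm (@wr_f_inj p); perm (@wr_s_inj p)]>>]).
apply/isogP; exists (morphm_morphism fM).
  apply/injmP => x y _ _ /= E; apply/permP => z; rewrite -(qK z).
  have := congr1 (fun s : {perm _} => s (q z)) E; rewrite /= /Phi !permE /= !qK.
  by move/(can_inj qK).
set f := morphm_morphism fM.
have eG : f @* G = f @* <<[set h; a]>> by rewrite -[in RHS]Ggen.
rewrite eG morphim_gen; last by rewrite subUset !sub1set hG Ga.
rewrite morphimU !morphim_set1 //= /f !morphmE.
have -> : Phi h = perm (@wr_f_inj p).
  by apply/permP => u; rewrite !permE /= -psi_f psiK.
have -> : Phi a = perm (@wr_s_inj p).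
  by apply/permP => u; rewrite !permE /= -psi_s psiK.
by [].
Qed.

End Iso.

Theorem corollary5p4 (p : nat) (L : finType) (mul : L -> L -> L) (e : L)
  (K : {group {perm L}}) :
  prime p -> odd p ->
  is_loop mul e -> rcc mul -> #|L| = (2 * p)%N ->
  rinn mul e \proper K -> K \proper rmlt mul ->
  #|rmlt mul : K| = 2 -> #|K : rinn mul e| = p ->
  rinn mul e != 1 -> rinn mul e <| K ->
  #|rinn mul e| = p /\
  (exists2 a, a \in rmlt mul :\: K &
     #[a] = 2 /\ rinn mul e \x (rinn mul e :^ a) = K) /\
  rmlt mul \isog wreath_Cp_C2 p.
Proof.
move=> pp op loop _ cardL pHK pKG iGK iKH ntH nHK.
case: loop => le re linj rinj.
pose Gg := [group of <<rtrans mul>>].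
pose Hg := [group of 'C_Gg[e | 'P]].
have rE : rinn mul e = Hg.
  by apply/setP=> g; rewrite !inE sub1set inE /= apermE.
rewrite rE in pHK iKH ntH nHK *.
have eGg : rmlt mul = Gg := erefl. rewrite eGg in pKG iGK *.
have Hstab g : (g \in Hg) = (g \in Gg) && (g e == e) by rewrite -rE inE.
have trans x : exists2 g, g \in Gg & g e = x.
  exists (perm (rinj x)); last by rewrite permE le.
  apply: mem_gen; rewrite inE; apply/existsP; exists x.
  by apply/forallP => y; rewrite permE.
have core (N : {group {perm L}}) : N <| Gg -> N \subset Hg -> N :=: 1.
  move=> nNG sNH; apply/trivgP/subsetP => n Nn; rewrite inE; apply/eqP/permP => x.
  rewrite perm1; have [g Ggg ge] := trans x.
  have : n ^ g^-1 \in Hg.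
    by apply: (subsetP sNH); rewrite memJ_norm //; apply: (subsetP (normal_norm nNG)); rewrite groupV.
  rewrite Hstab => /andP[_ /eqP].
  have -> : e = g^-1 x by rewrite -ge permK.
  by rewrite permJ => /perm_inj.
have sHK := proper_sub pHK.
have sKG := proper_sub pKG.
have [_ [b Gb nKb]] := properP pKG.
have Gb' : b \in Gg :\: K by rewrite inE nKb Gb.
have [cH _ _] := @core_main _ Gg K Hg p b pp core sHK sKG iGK iKH ntH nHK Gb'.
have d2 : 2 %| #|Gg| by rewrite -(Lagrange sKG) iGK dvdn_mull.
have [a Ga oa] := Cauchy (isT : prime 2) d2.
have nKa : a \notin K.
  apply/negP => Ka; have := order_dvdG Ka.
  by rewrite oa -(Lagrange sHK) iKH cH dvdn2 oddM op.
have Ga' : a \in Gg :\: K by rewrite inE nKa Ga.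
have [_ TI dp] := @core_main _ Gg K Hg p a pp core sHK sKG iGK iKH ntH nHK Ga'.
have [_ HK cent _] := dprodP dp.
split => //; split; first by exists a; rewrite ?inE ?nKa ?Ga.
have pH : prime #|Hg| by rewrite cH.
have [h hH] := cyclicP (prime_cyclic pH).
have oh : #[h] = p by rewrite /order -hH cH.
have aa : a * a = 1 by have := expg_order a; rewrite oa expgS expg1.
exact: (@iso_main L e p Gg K Hg h a pp cardL hH oh Ga nKa aa Hstab HK TI sKG cent iGK).
Qed.
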